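(* Let $T$ be a tree and $f,g$ proper 3-colorings of $T$. Then $$\operatorname{dist}_{\mathcal{C}_3(T)}(f,g)=\min_{h\in D(f,g)}\|h\|_1 .$$
   Context: Let $T$ be a finite tree with vertex set $V$ and edge set $E$. A proper 3-coloring of $T$ is a map $f\colon V\to\mathbb{Z}/3\mathbb{Z}$ with $f(u)\neq f(v)$ for every edge $uv\in E$. The 3-coloring graph $\mathcal{C}_3(T)$ has the proper 3-colorings as vertices, two colorings adjacent iff they differ at exactly one vertex. A labeling of $T$ is a map $h\colon V\to\mathbb{Z}$ with $|h(u)-h(v)|\le 1$ for every edge $uv\in E$, and $\|h\|_1=\sum_{v\in V}|h(v)|$. Given proper 3-colorings $f,g$, $D(f,g)$ is the set of labelings $h$ with $h(v)\equiv g(v)-f(v)\pmod 3$ for all $v\in V$. *)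

(* Defs.v *)
From HB Require Import structures.
From mathcomp Require Import all_boot all_order all_algebra.
Set Implicit Arguments. Unset Strict Implicit. Unset Printing Implicit Defensive.
Import Order.TTheory GRing.Theory Num.Theory.
Local Open Scope ring_scope.

Definition simple_graph (V : finType) (e : rel V) : Prop :=
  symmetric e /\ irreflexive e.

Definition connected_graph (V : finType) (e : rel V) : Prop :=
  forall u v : V, connect e u v.

Definition acyclic_graph (V : finType) (e : rel V) : Prop :=
  forall c : seq V, uniq c -> (2 < size c)%N -> ~~ cycle e c.

Definition is_tree (V : finType) (e : rel V) : Prop :=
  simple_graph e /\ connected_graph e /\ acyclic_graph e.

Definition coloring (V : finType) := {ffun V -> 'Z_3}.

Definition proper3 (V : finType) (e : rel V) (f : coloring V) : bool :=
  [forall u, forall v, e u v ==> (f u != f v)].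

Definition C3_adj (V : finType) (e : rel V) : rel (coloring V) :=
  fun f g => [&& proper3 e f, proper3 e g & #|[set v | f v != g v]| == 1%N].

Definition C3_walk (V : finType) (e : rel V) (f : coloring V) (p : seq (coloring V))
  (g : coloring V) : Prop :=
  path (C3_adj e) f p /\ last f p = g.

Definition C3_dist_is (V : finType) (e : rel V) (f g : coloring V) (n : nat) : Prop :=
  (exists p, C3_walk e f p g /\ size p = n) /\
  (forall p, C3_walk e f p g -> (n <= size p)%N).

Definition labeling (V : finType) (e : rel V) (h : V -> int) : Prop :=
  forall u v, e u v -> `|h u - h v| <= 1.

Definition norm1 (V : finType) (h : V -> int) : int := \sum_(v : V) `|h v|.

Definition inD (V : finType) (e : rel V) (f g : coloring V) (h : V -> int) : Prop :=
  labeling e h /\ forall v, (h v)%:~R = g v - f v :> 'Z_3.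

Definition minD_is (V : finType) (e : rel V) (f g : coloring V) (n : int) : Prop :=
  (exists h, inD e f g h /\ norm1 h = n) /\
  (forall h, inD e f g h -> n <= norm1 h).

(* Main.v *)
Require Import Defs.
From HB Require Import structures.
From mathcomp Require Import all_boot all_order all_algebra zify ring.
From Stdlib Require Import Classical.
Import Order.TTheory GRing.Theory Num.Theory.
Local Open Scope ring_scope.

Ltac z3c a := let H := fresh in case: a => [[|[|[|?]]] H] //.

Definition lift3 (z : 'Z_3) : int := if z == 0 then 0 else if z == 1 then 1 else -1.
Lemma lift3E z : (lift3 z)%:~R = z.
Proof. by apply/eqP; z3c z. Qed.
Lemma lift3n z : `|lift3 z| <= 1.
Proof. by z3c z. Qed.

Lemma int3 (x : int) : `|x| <= 1 -> x = -1 \/ x = 0 \/ x = 1.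
Proof. lia. Qed.

Lemma Zdelta (a b : 'Z_3) : a != b -> ((if a - b == 1 then 1 else -1 : int)%:~R : 'Z_3) = a - b.
Proof. by move=> H; apply/eqP; move: H; z3c a; z3c b. Qed.

Lemma Z1 (x : int) (a a' c b : 'Z_3) : `|x| <= 1 -> b != 0 -> a != c -> a' != c -> a != a' ->
  x%:~R = b - (a' - c) -> `|x + (if a' - a == 1 then 1 else -1)| <= 1.
Proof.
move=> /int3 [->|[->|->]]; by z3c a; z3c a'; z3c c; z3c b.
Qed.

Lemma Z2 (s : int) (a b c d : 'Z_3) : (s = 1 \/ s = -1) -> s%:~R = (c - d) - (a - b) ->
  c != d -> a + s%:~R != b.
Proof. by case=> ->; z3c a; z3c b; z3c c; z3c d. Qed.

Lemma Zasym (s : int) (a b : 'Z_3) : (s = 1 \/ s = -1) -> b = a + s%:~R -> a = b + s%:~R -> False.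
Proof. by case=> ->; z3c a; z3c b. Qed.

Lemma Zne (s : int) (a : 'Z_3) : (s = 1 \/ s = -1) -> a != a + s%:~R.
Proof. by case=> ->; z3c a. Qed.
Section Tree.
Variables (V : finType) (e : rel V).
Hypotheses (esym : symmetric e) (eirr : irreflexive e) (eac : acyclic_graph e).

Definition goodp (S : {set V}) (x : V) (p : seq V) :=
  [&& uniq (x :: p), all (mem S) (x :: p) & path e x p].

Lemma maxpath (S : {set V}) : forall k x p, (#|V| - size p = k)%N -> goodp S x p ->
  exists x' p', goodp S x' p' /\ forall y, y \in S -> e x' y -> y \in x' :: p'.
Proof.
elim=> [|k IH] x p Hk Hg.
  exists x, p; split=> // y yS exy; apply/negPn/negP=> yn.
  have: uniq (y :: x :: p) by rewrite /= yn; case/and3P: Hg.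
  move/card_uniqP => Hc.
  have H : (#|y :: x :: p| <= #|V|)%N := max_card _. rewrite Hc in H. have Hs : size (y :: x :: p) = (size p).+2 by []. rewrite Hs in H. lia.
case: (boolP [exists y, [&& y \in S, e x y & y \notin x :: p]]).
  case/existsP=> y /and3P[yS exy yn].
  case/and3P: Hg => Hu Ha Hp.
  apply: (IH y (x :: p)).
    have Hs2 : size (x :: p) = (size p).+1 by [].
    rewrite Hs2.
    have: uniq (y :: x :: p) by rewrite /= yn.
    move/card_uniqP => Hc.
    have H : (#|y :: x :: p| <= #|V|)%N := max_card _. rewrite Hc in H. have Hs : size (y :: x :: p) = (size p).+2 by []. rewrite Hs in H. lia.
  rewrite /goodp; apply/and3P; split; [by rewrite /= yn | by apply/andP; split | by apply/andP; split; [rewrite esym|]].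
move=> Hn; exists x, p; split=> // y yS exy; apply/negPn/negP=> yn.
by move/existsPn: Hn => /(_ y); rewrite yS exy yn.
Qed.

Lemma leaf (S : {set V}) : S != set0 ->
  exists2 x, x \in S & exists y0, forall y, y \in S -> e x y -> y = y0.
Proof.
case/set0Pn=> x0 x0S.
have [|x [p [Hg Hm]]] := @maxpath S _ x0 [::] (erefl _).
  by rewrite /goodp /= x0S.
case/and3P: Hg => Hu Ha Hp.
exists x; first by move: Ha => /= /andP[].
exists (head x p) => y yS exy.
have := Hm y yS exy; rewrite inE; case/orP.
  by move/eqP=> yx; move: exy; rewrite yx eirr.
move=> yp; case/splitPr: yp Hp Hu => p1 p2 Hp Hu.
case: p1 Hp Hu => [//|z p1] Hp Hu.
exfalso.
have Hc : cycle e (x :: rcons (z :: p1) y).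
  rewrite /= rcons_path last_rcons (esym y x) exy andbT rcons_path.
  move: Hp; rewrite /= cat_path /= => /and4P[-> -> -> _].
  by [].
have Hu' : uniq (x :: rcons (z :: p1) y).
  apply: subseq_uniq Hu.
  rewrite -cats1 -cat_cons. 
  have -> : x :: z :: p1 ++ y :: p2 = ((x :: z :: p1) ++ [:: y]) ++ p2 by rewrite -catA.
  exact: prefix_subseq.
have Hs : (2 < size (x :: rcons (z :: p1) y))%N by rewrite /= size_rcons.
have := eac _ Hu' Hs.
by rewrite Hc.
Qed.

Variable d : rel V.
Hypotheses (de : forall u w, d u w -> e u w) (dasym : forall u w, d u w -> ~~ d w u).

Lemma sink_aux : forall n (S : {set V}), #|S| = n -> S != set0 ->
  exists2 v, v \in S & forall w, w \in S -> ~~ d v w.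
Proof.
elim=> [|n IH] S Hc Hne.
  by move: Hne; rewrite -card_gt0 Hc.
have [x xS [y0 Hy0]] := leaf S Hne.
case: (boolP [exists w, (w \in S) && d x w]); last first.
  move/existsPn=> H; exists x => // w wS; move: (H w); by rewrite wS.
case/existsP=> w /andP[wS dxw].
have wy0 := Hy0 w wS (de _ _ dxw).
have wx : w != x by apply/eqP=> wx; move: (de _ _ dxw); rewrite wx eirr.
have HS' : #|S :\ x| = n by rewrite (cardsD1 x S) xS in Hc; case: Hc.
have [|z zS' Hz] := IH (S :\ x) HS'.
  by apply/set0Pn; exists w; rewrite !inE wx.
exists z; first by move: zS'; rewrite !inE => /andP[].
move=> u uS; case: (eqVneq u x) => [->|ux]; last by apply: Hz; rewrite !inE ux.
apply/negP=> dzx.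
have zS : z \in S by move: zS'; rewrite !inE => /andP[].
have zy0 := Hy0 z zS ltac:(rewrite esym; exact: de _ _ dzx).
move: (dasym _ _ dzx); by rewrite zy0 -wy0 dxw.
Qed.

Lemma sink (S : {set V}) : S != set0 ->
  exists2 v, v \in S & forall w, w \in S -> ~~ d v w.
Proof. exact: sink_aux. Qed.
End Tree.

Section Main.
Variables (V : finType) (e : rel V).
Hypotheses (esym : symmetric e) (eirr : irreflexive e) (eac : acyclic_graph e).

Lemma properP (f : coloring V) : proper3 e f -> forall u w, e u w -> f u != f w.
Proof. move/forallP=> H u w euw; move/forallP: (H u) => /(_ w); by rewrite euw. Qed.

Lemma properI (f : coloring V) : (forall u w, e u w -> f u != f w) -> proper3 e f.
Proof. move=> H; apply/forallP=> u; apply/forallP=> w; apply/implyP; exact: H. Qed.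

Lemma existsD_aux (r : V -> 'Z_3) : forall n (S : {set V}), #|S| = n ->
  exists h : V -> int, (forall v, (h v)%:~R = r v) /\
    forall u w, u \in S -> w \in S -> e u w -> `|h u - h w| <= 1.
Proof.
elim=> [|n IH] S Hc.
  exists (fun v => lift3 (r v)); split=> [v|u w]; first exact: lift3E.
  by move: Hc => /eqP; rewrite cards_eq0 => /eqP ->; rewrite inE.
have Hne : S != set0 by rewrite -card_gt0 Hc.
have [x xS [y0 Hy0]] := @leaf V e esym eirr eac S Hne.
have HS' : #|S :\ x| = n by rewrite (cardsD1 x S) xS in Hc; case: Hc.
have [h' [Hr Hl]] := IH _ HS'.
pose hx := if [pick y in S | e x y] is Some y then h' y + lift3 (r x - r y) else h' x.
exists (fun v => if v == x then hx else h' v); split.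
  move=> v; case: (eqVneq v x) => [->|//].
  rewrite /hx; case: pickP => [y _|_]; last exact: Hr.
  rewrite intrD Hr lift3E; ring.
have key : forall w, w \in S -> e x w -> w != x /\ `|hx - h' w| <= 1.
  move=> w wS exw; split; first by apply/eqP=> wx; move: exw; rewrite wx eirr.
  rewrite /hx; case: pickP => [y /andP[yS exy]|H]; last by move: (H w); rewrite /= wS exw.
  have -> : w = y by rewrite (Hy0 w wS exw) (Hy0 y yS exy).
  have := lift3n (r x - r y); lia.
move=> u w uS wS.
case: (eqVneq u x) => [->|ux]; case: (eqVneq w x) => [->|wx] euw.
- by move: euw; rewrite eirr.
- exact: (key w wS euw).2.
- rewrite distrC; rewrite esym in euw; exact: (key u uS euw).2.
- by apply: Hl => //; rewrite !inE ?ux ?wx.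
Qed.

Lemma existsD (r : V -> 'Z_3) : exists h : V -> int, (forall v, (h v)%:~R = r v) /\ labeling e h.
Proof.
have [h [H1 H2]] := existsD_aux r _ [set: V] (erefl _).
exists h; split=> // u w; exact: H2.
Qed.

Lemma stepA (f f' g : coloring V) (h' : V -> int) : proper3 e g -> C3_adj e f f' -> inD e f' g h' ->
  exists h, inD e f g h /\ norm1 h <= norm1 h' + 1.
Proof.
move=> pg /and3P[pf pf' /cards1P[v Hv]] [Hl Hr].
have Hd u : (f u != f' u) = (u == v) by rewrite -in_set1 -Hv inE.
pose dl : int := if f' v - f v == 1 then 1 else -1.
have fvv : f' v != f v by rewrite eq_sym Hd eqxx.
have key : forall w, e v w -> `|h' v + dl - h' w| <= 1.
  move=> w evw.
  have wv : w != v by apply/eqP=> wv; move: evw; rewrite wv eirr.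
  have fw : f w = f' w by have := Hd w; rewrite (negbTE wv) => /negbFE/eqP.
  rewrite addrAC.
  apply: (Z1 (h' v - h' w) (f v) (f' v) (f w) (g v - g w)).
  - exact: Hl.
  - by rewrite subr_eq0; exact: properP _ pg _ _ evw.
  - exact: properP _ pf _ _ evw.
  - rewrite fw; exact: properP _ pf' _ _ evw.
  - by rewrite Hd eqxx.
  - rewrite intrB !Hr fw; ring.
exists (fun u => if u == v then h' v + dl else h' u); split; first split.
- move=> u w.
  case: (eqVneq u v) => [->|uv]; case: (eqVneq w v) => [->|wv] euw.
  + by move: euw; rewrite eirr.
  + exact: key.
  + rewrite distrC; rewrite esym in euw; exact: key.
  + exact: Hl.
- move=> u; case: (eqVneq u v) => [->|uv].
    rewrite intrD Hr /dl Zdelta //; ring.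
  have fu : f u = f' u by have := Hd u; rewrite (negbTE uv) => /negbFE/eqP.
  by rewrite Hr fu.
- rewrite /norm1 (bigD1 v) //= (bigD1 v (P := predT)) //= eqxx.
  have -> : \sum_(u | true && (u != v)) `|(if u == v then h' v + dl else h' u)| =
            \sum_(u | u != v) `|h' u|.
    by apply: eq_big => [u|u /= uv]; rewrite ?(negbTE uv).
  have H2 := ler_normD (h' v) dl.
  have H1 : `|dl| = 1 by rewrite /dl; case: ifP.
  rewrite [leRHS]addrAC lerD //; by rewrite -H1.
Qed.

Lemma path_proper (f : coloring V) p : proper3 e f -> path (C3_adj e) f p -> proper3 e (last f p).
Proof. elim: p f => [//|f' p IH] f pf /= /andP[/and3P[_ pf' _] Hp]; exact: IH. Qed.

Lemma walkA (f : coloring V) p : proper3 e f -> path (C3_adj e) f p ->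
  exists h, inD e f (last f p) h /\ norm1 h <= (size p)%:Z.
Proof.
elim: p f => [|f' p IH] f pf /=.
  move=> _; exists (fun _ => 0); split; first split.
  - by move=> u w _; rewrite subrr normr0.
  - by move=> u; rewrite subrr.
  - by rewrite /norm1 big1.
move=> /andP[Ha Hp].
have pf' : proper3 e f' by case/and3P: Ha.
have [h' [Hh' Hn]] := IH f' pf' Hp.
have [h [Hh Hn2]] := stepA _ _ _ _ (path_proper _ _ pf' Hp) Ha Hh'.
exists h; split=> //. lia.
Qed.

Lemma stepB (f g : coloring V) (h : V -> int) : proper3 e f -> proper3 e g -> inD e f g h ->
  (exists v, h v != 0) -> exists f' h', C3_adj e f f' /\ inD e f' g h' /\ norm1 h' = norm1 h - 1.
Proof.
move=> pf pg [Hl Hr] [v0 hv0].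
have [vm _ Hmax] := @arg_maxnP V v0 predT (fun u => absz (h u)) isT.
set t := h vm.
have Hm : forall w, `|h w| <= `|t|.
  move=> w; have := Hmax w isT; rewrite /t; lia.
have t0 : t != 0 by have := Hm v0; move: hv0; rewrite /t; lia.
pose s : int := if 0 < t then 1 else -1.
have Hs : s = 1 \/ s = -1 by rewrite /s; case: ifP; [left|right].
have Hst : `|t| = s * t by rewrite /s; case: ifP; move: t0; lia.
pose S := [set u | h u == t].
pose d := fun u w => e u w && (f w == f u + s%:~R).
have de : forall u w, d u w -> e u w by move=> u w /andP[].
have dasym : forall u w, d u w -> ~~ d w u.
  move=> u w /andP[_ /eqP H1]; apply/negP => /andP[_ /eqP H2]; exact: (Zasym _ _ _ Hs H1 H2).
have Sne : S != set0 by apply/set0Pn; exists vm; rewrite inE.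
have [v vS Hsink] := @sink V e esym eirr eac d de dasym S Sne.
have hv : h v = t by move: vS; rewrite inE => /eqP.
have N1 : forall w, e v w -> h w = t \/ h w = t - s.
  move=> w evw; have := Hl v w evw; have := Hm w; rewrite hv.
  move: t0 Hst; rewrite /s; case: ifP; lia.
have N2 : forall w, e v w -> f v + s%:~R != f w.
  move=> w evw; case: (N1 w evw) => hw.
    have := Hsink w; rewrite inE hw eqxx /d evw /= => /(_ isT).
    by rewrite eq_sym.
  apply: (Z2 _ _ _ _ _ Hs _ (properP _ pg _ _ evw)).
  have -> : s = h v - h w by rewrite hv hw; ring.
  rewrite intrB !Hr; ring.
pose f' : coloring V := [ffun u => if u == v then f v + s%:~R else f u].
pose h' := fun u => if u == v then h v - s else h u.
exists f', h'; split; [|split; [split|]].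
- apply/and3P; split=> //.
    apply: properI => u w; rewrite !ffunE.
    case: (eqVneq u v) => [->|uv]; case: (eqVneq w v) => [->|wv] euw.
    + by move: euw; rewrite eirr.
    + exact: N2.
    + rewrite eq_sym; rewrite esym in euw; exact: N2.
    + exact: properP _ pf _ _ euw.
  apply/cards1P; exists v; apply/setP => u; rewrite !inE ffunE.
  case: (eqVneq u v) => [->|uv]; [exact: Zne | by rewrite eqxx].
- move=> u w; rewrite /h'.
  case: (eqVneq u v) => [->|uv]; case: (eqVneq w v) => [->|wv] euw.
  + by move: euw; rewrite eirr.
  + have := N1 w euw; move: Hs; rewrite hv; lia.
  + rewrite esym in euw; have := N1 u euw; move: Hs; rewrite hv; lia.
  + exact: Hl.
- move=> u; rewrite /h' ffunE; case: (eqVneq u v) => [->|uv]; last exact: Hr.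
  rewrite intrB Hr; ring.
- rewrite /norm1 (bigD1 v) //= (bigD1 v (P := predT)) //= /h' eqxx.
  have -> : \sum_(u | true && (u != v)) `|(if u == v then h v - s else h u)| =
            \sum_(u | u != v) `|h u|.
    by apply: eq_big => [u|u /= uv]; rewrite ?(negbTE uv).
  rewrite hv [RHS]addrAC; congr (_ + _); move: t0 Hst; rewrite /s; case: ifP; lia.
Qed.

Definition normn (h : V -> int) : nat := (\sum_v absz (h v))%N.

Lemma norm1E h : norm1 h = (normn h)%:Z.
Proof.
rewrite /norm1 /normn (big_morph Posz PoszD (erefl 0%:Z)).
by apply: eq_bigr => v _; rewrite abszE.
Qed.

Lemma walkB (g : coloring V) : forall N (f : coloring V) h, proper3 e f -> proper3 e g -> inD e f g h ->
  normn h = N -> exists p, C3_walk e f p g /\ (size p <= N)%N.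
Proof.
elim=> [|N IH] f h pf pg Hh HN.
  exists [::]; split=> //; split=> //=.
  apply/ffunP => v.
  have : h v = 0.
    move: HN; rewrite /normn => /eqP; rewrite sum_nat_eq0 => /forallP/(_ v).
    by rewrite absz_eq0 => /eqP.
  move=> hv; have := Hh.2 v; rewrite hv => /eqP; rewrite eq_sym subr_eq0 => /eqP.
  by [].
have Hex : exists v, h v != 0.
  case: (boolP [exists v, h v != 0]) => [/existsP //|/existsPn H].
  move: HN; rewrite /normn big1 // => v _; have := H v; rewrite negbK => /eqP ->.
  by [].
have [f' [h' [Ha [Hh' Hn]]]] := stepB _ _ _ pf pg Hh Hex.
have HN' : normn h' = N by move: Hn; rewrite !norm1E HN; lia.
have pf' : proper3 e f' by case/and3P: Ha.
have [p [[Hp Hlast] Hsz]] := IH f' h' pf' pg Hh' HN'.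
exists (f' :: p); split; first split.
- by rewrite /= Ha Hp.
- by [].
- by rewrite /=.
Qed.

End Main.

Lemma minnat (P : nat -> Prop) : (exists n, P n) -> exists n, P n /\ forall k, P k -> (n <= k)%N.
Proof.
case=> n; elim: n {-2}n (leqnn n) => [|m IH] n Hn Pn.
  exists n; split=> // k _; move: Hn; lia.
case: (classic (exists k, (k < n)%N /\ P k)) => [[k [Hk Pk]]|H].
  apply: (IH k) => //; lia.
exists n; split=> // k Pk; case: (leqP n k) => // Hk.
by exfalso; apply: H; exists k.
Qed.

Theorem mainTheorem6 (V : finType) (e : rel V) (f g : coloring V) :
  is_tree e -> proper3 e f -> proper3 e g ->
  exists n : nat, C3_dist_is e f g n /\ minD_is e f g (n%:Z).
Proof.
move=> [[esym eirr] [_ eac]] pf pg.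
have [h0 [Hr0 Hl0]] := @existsD V e esym eirr eac (fun v => g v - f v).
have Hh0 : inD e f g h0 by split.
have [p0 [Hp0 _]] := @walkB V e esym eirr eac g _ f h0 pf pg Hh0 (erefl _).
have [n [[p [Hp Hsz]] Hmin]] := minnat (fun n => exists p, C3_walk e f p g /\ size p = n)
  (ex_intro _ (size p0) (ex_intro _ p0 (conj Hp0 (erefl _)))).
exists n; split.
  split; [by exists p | move=> q Hq; apply: Hmin; by exists q].
case: Hp => Hpath Hlast.
have [h [Hh Hn]] := @walkA V e esym eirr f p pf Hpath.
rewrite Hlast in Hh.
have Hlow : forall h', inD e f g h' -> (n%:Z <= norm1 h').
  move=> h' Hh'.
  have [q [Hq Hq2]] := @walkB V e esym eirr eac g _ f h' pf pg Hh' (erefl _).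
  rewrite norm1E. have := Hmin (size q) (ex_intro _ q (conj Hq (erefl _))). lia.
split; last exact: Hlow.
exists h; split=> //. have := Hlow h Hh. rewrite Hsz in Hn. lia.
Qed.
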